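(* Let $X\ge 0$ be a random variable with an absolutely continuous distribution $P_X$ whose ordinary moments $\mu_n=\mathbb{E}[X^n]$ are finite for all $n\in\mathbb{N}$, and suppose that for some $q_0\in(0,1]$ $$\limsup_{n\to\infty}\frac{\ln\mu_n}{n^2}=\frac{\ln(1/q_0)}{2}.$$ Then $P_X$ is $q$-moment determinate for every $q\in(0,q_0)$. In particular, if $\limsup_{n\to\infty}\frac{\ln\mu_n}{n^2}=0$, then $P_X$ is $q$-moment determinate for every $q\in(0,1)$.
   Context: For $0<q<1$: the Jackson $q$-integral is $\int_0^a g(t)\,d_qt=a(1-q)\sum_{j=0}^\infty g(aq^j)q^j$ for $a>0$, and $\int_0^\infty g(t)\,d_qt=(1-q)\sum_{j\in\mathbb{Z}}g(q^j)q^j$. A function $f$ on $(0,\infty)$ is a $q$-density of $X$ (with distribution function $F_X$) if $F_X(x)=\int_0^x f(t)\,d_qt$ for all $x>0$; for a non-negative $X$ with $F_X$ continuous at $0$ (in particular for absolutely continuous $P_X$) a $q$-density exists, namely $f(t)=\frac{F_X(t)-F_X(qt)}{t(1-q)}$. The $n$-th $q$-moment is $m_q(n;X)=\int_0^\infty t^nf(t)\,d_qt=(1-q)\sum_{j\in\mathbb{Z}}q^{j(n+1)}f(q^j)$. Write $f\sim g$ iff $f(q^j)=g(q^j)$ for all $j\in\mathbb{Z}$. $P_X$ (with $q$-density $f$ and finite $q$-moments of all orders) is $q$-moment determinate if every random variable $Y$ with $q$-density $g$ and $m_q(k;Y)=m_q(k;X)$ for all $k\in\mathbb{N}_0$ satisfies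 $f\sim g$. *)

(* Defs.v *)
From Stdlib Require Import Reals ZArith Lra.
Open Scope R_scope.

(* A (law of a) real random variable is represented by its distribution
   function F_X(x) = P(X <= x). *)
Definition is_cdf (F : R -> R) : Prop :=
  (forall x y, x <= y -> F x <= F y) /\
  (forall x eps, 0 < eps -> exists d, 0 < d /\
      forall y, x <= y < x + d -> Rabs (F y - F x) < eps) /\
  (forall eps, 0 < eps -> exists M, forall x, x <= M -> Rabs (F x) < eps) /\
  (forall eps, 0 < eps -> exists M, forall x, M <= x -> Rabs (F x - 1) < eps).

Definition nonneg_cdf (F : R -> R) : Prop := forall x, x < 0 -> F x = 0.

Fixpoint rsum (f : nat -> R) (k : nat) : R :=
  match k with O => 0 | S k' => rsum f k' + f k' end.

(* P_X absolutely continuous w.r.t. Lebesgue measure, i.e. F_X is an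
   absolutely continuous function on R. *)
Definition abs_cont_cdf (F : R -> R) : Prop :=
  forall eps, 0 < eps -> exists delta, 0 < delta /\
    forall (k : nat) (a b : nat -> R),
      (forall i, (i < k)%nat -> a i < b i) ->
      (forall i, (S i < k)%nat -> b i <= a (S i)) ->
      rsum (fun i => b i - a i) k < delta ->
      rsum (fun i => Rabs (F (b i) - F (a i))) k < eps.

(* ordinary moment mu_n = E[X^n] for n >= 1 and X >= 0, via
   E[X^n] = int_0^oo n x^(n-1) (1 - F(x)) dx (improper Riemann integral). *)
Definition is_moment (F : R -> R) (n : nat) (mu : R) : Prop :=
  exists pr : forall b, Riemann_integrable
                 (fun x => INR n * x ^ (n - 1) * (1 - F x)) 0 b,
    forall eps, 0 < eps -> exists B, forall b, B <= b ->
      Rabs (RiemannInt (pr b) - mu) < eps.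

Definition is_limsup (u : nat -> R) (L : R) : Prop :=
  forall eps, 0 < eps ->
    (exists N, forall n, (N <= n)%nat -> u n < L + eps) /\
    (forall N, exists n, (N <= n)%nat /\ L - eps < u n).

Definition jackson0 (q : R) (g : R -> R) (a s : R) : Prop :=
  infinite_sum (fun j => a * (1 - q) * g (a * q ^ j) * q ^ j) s.

Definition q_density (q : R) (F f : R -> R) : Prop :=
  forall x, 0 < x -> jackson0 q f x (F x).

Definition sumZ (h : Z -> R) (s : R) : Prop :=
  exists s1 s2,
    infinite_sum (fun k => h (Z.of_nat k)) s1 /\
    infinite_sum (fun k => h (- Z.of_nat k - 1)%Z) s2 /\ s = s1 + s2.

Definition q_moment (q : R) (f : R -> R) (n : nat) (m : R) : Prop :=
  sumZ (fun j => (1 - q) * powerRZ q (j * Z.of_nat (S n)) * f (powerRZ q j)) m.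

Definition qeq (q : R) (f g : R -> R) : Prop :=
  forall j : Z, f (powerRZ q j) = g (powerRZ q j).

Definition q_moment_determinate (q : R) (F : R -> R) : Prop :=
  exists f, q_density q F f /\
    (forall n, exists m, q_moment q f n m) /\
    forall (G g : R -> R), is_cdf G -> q_density q G g ->
      (forall k, exists m, q_moment q f k m /\ q_moment q g k m) ->
      qeq q f g.

(* Main.v *)
Require Import Defs.
From Stdlib Require Import Reals ZArith Lra Lia List.
Open Scope R_scope.

Lemma exp_le_mono x y : x <= y -> exp x <= exp y.
Proof. intros [H|H]; [left; apply exp_increasing; auto| subst; lra]. Qed.

Lemma Un_cv_ext (u v : nat -> R) l : (forall n, u n = v n) -> Un_cv u l -> Un_cv v l.
Proof. intros E H eps He; destruct (H eps He) as [N HN]; exists N; intros n Hn; rewrite <- E; auto. Qed.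

Lemma isum_ext (a b : nat -> R) l : (forall n, a n = b n) -> infinite_sum a l -> infinite_sum b l.
Proof. intros E H eps He; destruct (H eps He) as [N HN]; exists N; intros n Hn.
  rewrite <- (sum_eq a b); auto. Qed.

Lemma isum_plus a b l1 l2 : infinite_sum a l1 -> infinite_sum b l2 ->
  infinite_sum (fun k => a k + b k) (l1 + l2).
Proof. intros H1 H2. apply (Un_cv_ext (fun N => sum_f_R0 a N + sum_f_R0 b N)).
  - intros; now rewrite plus_sum.
  - apply CV_plus; assumption. Qed.

Lemma isum_scal a l c : infinite_sum a l -> infinite_sum (fun k => c * a k) (c * l).
Proof. intros H. apply (Un_cv_ext (fun N => c * sum_f_R0 a N)).
  - intros; rewrite scal_sum; apply sum_eq; intros; ring.
  - intros eps He. destruct (Req_dec c 0) as [->|Hc].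
    + exists 0%nat; intros; unfold Rdist; rewrite !Rmult_0_l, Rminus_0_r, Rabs_R0; lra.
    + assert (Hp : 0 < Rabs c) by (apply Rabs_pos_lt; auto).
      destruct (H (eps / Rabs c)) as [N HN]. { apply Rdiv_lt_0_compat; lra. }
      exists N; intros n Hn; specialize (HN n Hn); unfold Rdist in *.
      replace (c * sum_f_R0 a n - c * l) with (c * (sum_f_R0 a n - l)) by ring.
      rewrite Rabs_mult. apply (Rmult_lt_compat_l (Rabs c)) in HN; auto.
      replace (Rabs c * (eps / Rabs c)) with eps in HN by (field; lra). lra. Qed.

Lemma isum_unique a l1 l2 : infinite_sum a l1 -> infinite_sum a l2 -> l1 = l2.
Proof. intros; eapply UL_sequence; eauto. Qed.

Lemma sumZ_ext h1 h2 s : (forall j, h1 j = h2 j) -> sumZ h1 s -> sumZ h2 s.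
Proof. intros E (s1 & s2 & H1 & H2 & ->). exists s1, s2; split; [|split]; auto;
  eapply isum_ext; eauto; intros; simpl; auto. Qed.

Lemma sumZ_plus h1 h2 s t : sumZ h1 s -> sumZ h2 t -> sumZ (fun j => h1 j + h2 j) (s + t).
Proof. intros (s1 & s2 & H1 & H2 & ->) (t1 & t2 & G1 & G2 & ->).
  exists (s1 + t1), (s2 + t2); split; [|split].
  - apply (isum_plus _ _ _ _ H1 G1).
  - apply (isum_plus _ _ _ _ H2 G2).
  - ring. Qed.

Lemma sumZ_scal h s c : sumZ h s -> sumZ (fun j => c * h j) (c * s).
Proof. intros (s1 & s2 & H1 & H2 & ->). exists (c * s1), (c * s2); split; [|split].
  - apply (isum_scal _ _ _ H1).
  - apply (isum_scal _ _ _ H2).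
  - ring. Qed.

Lemma sumZ_unique h s t : sumZ h s -> sumZ h t -> s = t.
Proof. intros (s1 & s2 & H1 & H2 & ->) (t1 & t2 & G1 & G2 & ->).
  rewrite (isum_unique _ _ _ H1 G1), (isum_unique _ _ _ H2 G2); auto. Qed.

Lemma sumZ_zero : sumZ (fun _ => 0) 0.
Proof. exists 0, 0; split; [|split]; try lra; intros eps He; exists 0%nat; intros n _;
  unfold Rdist; rewrite sum_cte, Rmult_0_l, Rminus_0_r, Rabs_R0; lra. Qed.

Definition SZ (h : Z -> R) (N : nat) : R :=
  sum_f_R0 (fun k => h (Z.of_nat k)) N + sum_f_R0 (fun k => h (- Z.of_nat k - 1)%Z) N.

Lemma sumZ_cv h s : sumZ h s -> Un_cv (SZ h) s.
Proof. intros (s1 & s2 & H1 & H2 & ->). unfold SZ. apply CV_plus; auto. Qed.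

Lemma sum_modif (a a' : nat -> R) k0 N : (forall k, k <> k0 -> a k = a' k) -> (k0 <= N)%nat ->
  sum_f_R0 a N = sum_f_R0 a' N + (a k0 - a' k0).
Proof. intros E. induction N; intros Hk.
  - assert (k0 = 0%nat) by lia; subst; simpl; ring.
  - destruct (Nat.eq_dec k0 (S N)) as [->|Hne].
    + simpl. rewrite (sum_eq a a'). ring. intros; apply E; lia.
    + simpl. rewrite IHN by lia. rewrite (E (S N)) by lia. ring. Qed.

Definition modif (e : Z -> R) (i : Z) : Z -> R := fun j => if Z.eq_dec j i then 0 else e j.
Definition idx (i : Z) : nat := Z.to_nat (Z.max i (- i - 1)).

Lemma SZ_modif e i N : (idx i <= N)%nat -> SZ e N = SZ (modif e i) N + e i.
Proof. intros Hi. unfold SZ, modif, idx in *.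
  destruct (Z_le_gt_dec 0 i) as [Hp|Hn].
  - rewrite (sum_modif (fun k => e (Z.of_nat k)) (fun k => if Z.eq_dec (Z.of_nat k) i then 0 else e (Z.of_nat k)) (Z.to_nat i)).
    + rewrite (sum_eq (fun k => e (- Z.of_nat k - 1)%Z) (fun k => if Z.eq_dec (- Z.of_nat k - 1) i then 0 else e (- Z.of_nat k - 1)%Z)).
      * rewrite Z2Nat.id by lia. destruct (Z.eq_dec i i); [ring|congruence].
      * intros k _. destruct (Z.eq_dec (- Z.of_nat k - 1) i); [lia|auto].
    + intros k Hk. destruct (Z.eq_dec (Z.of_nat k) i); [|auto]. subst; rewrite Nat2Z.id in Hk; congruence.
    + lia.
  - rewrite (sum_modif (fun k => e (- Z.of_nat k - 1)%Z) (fun k => if Z.eq_dec (- Z.of_nat k - 1) i then 0 else e (- Z.of_nat k - 1)%Z) (Z.to_nat (- i - 1))).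
    + rewrite (sum_eq (fun k => e (Z.of_nat k)) (fun k => if Z.eq_dec (Z.of_nat k) i then 0 else e (Z.of_nat k))).
      * rewrite Z2Nat.id by lia. replace (- (- i - 1) - 1)%Z with i by lia. destruct (Z.eq_dec i i); [ring|congruence].
      * intros k _. destruct (Z.eq_dec (Z.of_nat k) i); [lia|auto].
    + intros k Hk. destruct (Z.eq_dec (- Z.of_nat k - 1) i); [|auto]. exfalso; apply Hk. lia.
    + lia. Qed.

Lemma SZ_le h1 h2 N : (forall j, h1 j <= h2 j) -> SZ h1 N <= SZ h2 N.
Proof. intros H; unfold SZ; apply Rplus_le_compat; apply sum_Rle; intros; apply H. Qed.

Lemma SZ_abs h N : Rabs (SZ h N) <= SZ (fun j => Rabs (h j)) N.
Proof. unfold SZ. eapply Rle_trans; [apply Rabs_triang|].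
  apply Rplus_le_compat; apply sum_f_R0_triangle. Qed.

Lemma SZ_nonneg h N : (forall j, 0 <= h j) -> 0 <= SZ h N.
Proof. intros H. replace 0 with (SZ (fun _ => 0) N). apply SZ_le; auto.
  unfold SZ; rewrite !sum_cte; ring. Qed.

Lemma SZ_plus h1 h2 N : SZ (fun j => h1 j + h2 j) N = SZ h1 N + SZ h2 N.
Proof. unfold SZ; rewrite !plus_sum; ring. Qed.

Lemma SZ_scal h c N : SZ (fun j => c * h j) N = c * SZ h N.
Proof. unfold SZ. rewrite Rmult_plus_distr_l, !scal_sum. f_equal; apply sum_eq; intros; ring. Qed.

Lemma cv_le_bound (u : nat -> R) s T N0 : Un_cv u s -> (forall N, (N0 <= N)%nat -> u N <= T) -> s <= T.
Proof. intros H HT. destruct (Rle_dec s T) as [|Hn]; auto. exfalso.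
  destruct (H (s - T)) as [N HN]; [lra|]. specialize (HN (max N N0) ltac:(lia)).
  specialize (HT (max N N0) ltac:(lia)). unfold Rdist in HN.
  apply Rabs_def2 in HN. lra. Qed.

Lemma cv_ge_bound (u : nat -> R) s T N0 : Un_cv u s -> (forall N, (N0 <= N)%nat -> T <= u N) -> T <= s.
Proof. intros H HT. destruct (Rle_dec T s) as [|Hn]; auto. exfalso.
  destruct (H (T - s)) as [N HN]; [lra|]. specialize (HN (max N N0) ltac:(lia)).
  specialize (HT (max N N0) ltac:(lia)). unfold Rdist in HN.
  apply Rabs_def2 in HN. lra. Qed.

Lemma sumZ_iso_bound (e B : Z -> R) (s T : R) (i : Z) : sumZ e s -> (forall j, 0 <= B j) ->
  (forall j, j <> i -> Rabs (e j) <= B j) -> (forall N, SZ B N <= T) -> Rabs (s - e i) <= T.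
Proof. intros Hs HB He HT.
  assert (Hc : Un_cv (fun N => SZ e N - e i) (s - e i)).
  { apply (Un_cv_ext (fun N => SZ e N + (- e i))). intros; ring.
    apply CV_plus. apply sumZ_cv; auto. intros eps Heps; exists 0%nat; intros; unfold Rdist.
    replace (- e i - - e i) with 0 by ring; rewrite Rabs_R0; lra. }
  assert (Hca : Un_cv (fun N => Rabs (SZ e N - e i)) (Rabs (s - e i))).
  { intros eps Heps; destruct (Hc eps Heps) as [N HN]; exists N; intros n Hn.
    specialize (HN n Hn); unfold Rdist in *. eapply Rle_lt_trans; [apply Rabs_triang_inv2|]; auto. }
  apply (cv_le_bound _ _ _ (idx i) Hca). intros N HN.
  rewrite (SZ_modif e i N HN). replace (SZ (modif e i) N + e i - e i) with (SZ (modif e i) N) by ring.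
  eapply Rle_trans; [apply SZ_abs|]. eapply Rle_trans; [|apply (HT N)]. apply SZ_le.
  intros j; unfold modif; destruct (Z.eq_dec j i); [rewrite Rabs_R0; auto| auto]. Qed.

Lemma sumZ_nonneg_le h s : sumZ h s -> (forall j, 0 <= h j) -> forall N, SZ h N <= s.
Proof. intros Hs H N. apply growing_ineq; [|apply sumZ_cv; auto].
  intros n; unfold SZ. change (sum_f_R0 (fun k => h (Z.of_nat k)) (S n)) with (sum_f_R0 (fun k => h (Z.of_nat k)) n + h (Z.of_nat (S n))).
  change (sum_f_R0 (fun k => h (- Z.of_nat k - 1)%Z) (S n)) with (sum_f_R0 (fun k => h (- Z.of_nat k - 1)%Z) n + h (- Z.of_nat (S n) - 1)%Z).
  pose proof (H (Z.of_nat (S n))); pose proof (H (- Z.of_nat (S n) - 1)%Z). lra. Qed.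

Lemma sumZ_term_le h s : sumZ h s -> (forall j, 0 <= h j) -> forall j, h j <= s.
Proof. intros Hs H j. rewrite <- (Rplus_0_l (h j)).
  eapply Rle_trans; [|apply (sumZ_nonneg_le h s Hs H (idx j))].
  rewrite (SZ_modif h j) by lia. apply Rplus_le_compat_r. apply SZ_nonneg.
  intros k; unfold modif; destruct (Z.eq_dec k j); auto; lra. Qed.

Fixpoint peval (c : list R) (x : R) : R :=
  match c with nil => 0 | a :: c' => a + x * peval c' x end.
Fixpoint padd (c1 c2 : list R) : list R :=
  match c1, c2 with nil, _ => c2 | _, nil => c1 | a :: c1', b :: c2' => (a + b) :: padd c1' c2' end.
Lemma peval_padd c1 c2 x : peval (padd c1 c2) x = peval c1 x + peval c2 x.
Proof. revert c2; induction c1 as [|a c1 IH]; intros [|b c2]; simpl; try ring. rewrite IH; ring. Qed.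
Lemma peval_scale k c x : peval (map (Rmult k) c) x = k * peval c x.
Proof. induction c as [|a c IH]; simpl; [ring|rewrite IH; ring]. Qed.

Definition Polyish (P : R -> R) := exists c, forall x, P x = peval c x.

Lemma poly_mon n : Polyish (fun x => x ^ n).
Proof. exists (repeat 0 n ++ (1 :: nil)). intros x; induction n as [|n IH]; simpl; [ring|rewrite <- IH; ring]. Qed.

Lemma poly_mul_lin a P : Polyish P -> Polyish (fun x => (1 - a * x) * P x).
Proof. intros [c Hc]. exists (padd c (map (Rmult (- a)) (0 :: c))). intros x.
  rewrite peval_padd, peval_scale; simpl; rewrite Hc; ring. Qed.

Lemma ann_poly (z d : Z -> R) : (forall n, sumZ (fun j => z j ^ n * d j) 0) ->
  forall c m, sumZ (fun j => d j * (z j ^ m * peval c (z j))) 0.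
Proof. intros H c; induction c as [|a c IH]; intros m; simpl.
  - eapply sumZ_ext; [|apply sumZ_zero]; intros; simpl; ring.
  - pose proof (sumZ_plus _ _ _ _ (sumZ_scal _ _ a (H m)) (IH (S m))) as G.
    eapply sumZ_ext; [|rewrite Rmult_0_r, Rplus_0_r in G; exact G]. intros j; simpl; ring. Qed.

Lemma ann (z d : Z -> R) P : (forall n, sumZ (fun j => z j ^ n * d j) 0) -> Polyish P ->
  sumZ (fun j => d j * P (z j)) 0.
Proof. intros H [c Hc]. eapply sumZ_ext; [|apply (ann_poly z d H c 0)]. intros j; simpl; rewrite Hc; ring. Qed.

Lemma pow_le1 x n : 0 <= x <= 1 -> x ^ n <= 1.
Proof. intros H; rewrite <- (pow1 n); apply pow_incr; lra. Qed.

Definition Ez (q x : R) := exp (x * ln q).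

Lemma Ez_plus q x y : Ez q (x + y) = Ez q x * Ez q y.
Proof. unfold Ez; rewrite <- exp_plus; f_equal; ring. Qed.
Lemma Ez_pos q x : 0 < Ez q x.
Proof. apply exp_pos. Qed.
Lemma Ez_pow q x n : Ez q x ^ n = Ez q (INR n * x).
Proof. induction n as [|n IH]; simpl pow.
  - unfold Ez; simpl; rewrite Rmult_0_l, Rmult_0_l, exp_0; auto.
  - rewrite IH, <- Ez_plus, S_INR; f_equal; ring. Qed.
Lemma Ez_0 q : Ez q 0 = 1.
Proof. unfold Ez; rewrite Rmult_0_l; apply exp_0. Qed.
Lemma Ez_nat q n : 0 < q -> Ez q (INR n) = q ^ n.
Proof. intros; rewrite <- Rpower_pow; auto. Qed.
Lemma Ez_anti q x y : 0 < q < 1 -> x <= y -> Ez q y <= Ez q x.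
Proof. intros Hq Hxy; unfold Ez; apply exp_le_mono.
  assert (ln q < 0) by (rewrite <- ln_1; apply ln_increasing; lra). nra. Qed.
Lemma Ez_opp q x : Ez q (- x) = / Ez q x.
Proof. unfold Ez; rewrite <- exp_Ropp; f_equal; ring. Qed.

Lemma powerRZ_Ez q z : 0 < q -> powerRZ q z = Ez q (IZR z).
Proof. intros Hq. destruct z as [|p|p]; simpl powerRZ.
  - rewrite Ez_0; auto.
  - rewrite <- positive_nat_Z, <- INR_IZR_INZ, Ez_nat; auto.
  - rewrite <- Pos2Z.opp_pos, opp_IZR, Ez_opp, <- positive_nat_Z, <- INR_IZR_INZ, Ez_nat; auto. Qed.

Fixpoint Qp (q : R) (L : nat) (u : R) : R :=
  match L with O => 1 | S L' => Qp q L' u * (1 - u * q ^ (S L')) end.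

Lemma Qp_01 q L u : 0 < q < 1 -> 0 <= u <= 1 -> 0 <= Qp q L u <= 1.
Proof. intros Hq Hu. induction L as [|L IH]; cbn [Qp]; [lra|].
  assert (0 < q ^ S L <= 1). { split. apply pow_lt; lra. apply pow_le1 ; lra. }
  assert (u * q ^ S L <= 1 * 1) by (apply Rmult_le_compat; lra).
  assert (0 <= u * q ^ S L) by (apply Rmult_le_pos; lra).
  split. apply Rmult_le_pos; lra. rewrite <- (Rmult_1_r 1). apply Rmult_le_compat; lra. Qed.

Lemma Qp_zero q L u l : (1 <= l <= L)%nat -> u * q ^ l = 1 -> Qp q L u = 0.
Proof. intros Hl Hu. induction L as [|L IH]; [lia|]. cbn [Qp].
  destruct (Nat.eq_dec l (S L)) as [->|Hne].
  - rewrite Hu; ring.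
  - rewrite IH by lia; ring. Qed.

Lemma Qp_low_aux q L : 0 < q < 1 -> exp (- ((1 - q ^ L) * q / (1 - q) ^ 2)) <= Qp q L 1.
Proof. intros Hq. induction L as [|L IH]; cbn [Qp].
  - simpl. replace (- ((1 - 1) * q / ((1 - q) * ((1 - q) * 1)))) with 0 by (field; lra). rewrite exp_0; lra.
  - assert (HqL : 0 < q ^ S L < 1). { split. apply pow_lt; lra. apply pow_lt_1_compat; lra || lia. }
    set (x := q ^ S L) in *.
    assert (Hf : exp (- (x / (1 - q))) <= 1 - 1 * x).
    { set (y := x / (1 - x)).
      assert (Hy : 0 < y) by (unfold y; apply Rdiv_lt_0_compat; lra).
      pose proof (exp_ineq1 y ltac:(lra)) as E.
      assert (E2 : exp (- y) <= 1 - x).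
      { rewrite exp_Ropp. replace (1 - x) with (/ (1 + y)) by (unfold y; field; lra).
        apply Rinv_le_contravar; lra. }
      eapply Rle_trans; [|rewrite Rmult_1_l; exact E2]. apply exp_le_mono.
      assert (x / (1 - x) <= x / (1 - q)). { unfold Rdiv. apply Rmult_le_compat_l; [lra|].
        apply Rinv_le_contravar; [lra|]. assert (x <= q). { unfold x; simpl. assert (HL1 : q ^ L <= 1) by (apply pow_le1; lra).
          assert (HH : q * q ^ L <= q * 1) by (apply Rmult_le_compat_l; lra). rewrite Rmult_1_r in HH; exact HH. } lra. }
      unfold y; lra. }
    assert (Hexp : - ((1 - x) * q / (1 - q) ^ 2) = - ((1 - q ^ L) * q / (1 - q) ^ 2) + - (x / (1 - q))).
    { unfold x; simpl; field; lra. }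
    rewrite Hexp, exp_plus. apply Rmult_le_compat; try (left; apply exp_pos); auto. Qed.

Lemma Qp_low q L : 0 < q < 1 -> exp (- (q / (1 - q) ^ 2)) <= Qp q L 1.
Proof. intros Hq. eapply Rle_trans; [|apply Qp_low_aux; auto]. apply exp_le_mono.
  assert (0 < q ^ L) by (apply pow_lt; lra).
  assert (0 < (1 - q) ^ 2) by (apply pow_lt; lra).
  apply Ropp_le_contravar. unfold Rdiv. apply Rmult_le_compat_r. left; apply Rinv_0_lt_compat; auto. nra. Qed.

Lemma Qp_big q L u : 0 < q < 1 -> 0 < u -> 1 <= u * q ^ L ->
  Rabs (Qp q L u) <= exp (INR L * ln u + ln q * (INR L * (INR L + 1) / 2)).
Proof. intros Hq Hu. induction L as [|L IH]; intros HL; cbn [Qp].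
  - simpl. replace (0 * ln u + ln q * (0 * (0 + 1) / 2)) with 0 by field. rewrite exp_0, Rabs_R1; lra.
  - assert (HqL : q ^ S L <= q ^ L) by (simpl; pose proof (pow_le q L ltac:(lra)); nra).
    assert (H1 : 1 <= u * q ^ L) by nra.
    specialize (IH H1). rewrite Rabs_mult.
    assert (Hf : Rabs (1 - u * q ^ S L) <= exp (ln u + INR (S L) * ln q)).
    { rewrite exp_plus, exp_ln by auto.
      assert (E : q ^ S L = exp (INR (S L) * ln q)) by (rewrite <- Rpower_pow by lra; reflexivity).
      rewrite E in *. rewrite Rabs_left1 by lra. pose proof (exp_pos (INR (S L) * ln q)). nra. }
    eapply Rle_trans; [apply Rmult_le_compat; try apply Rabs_pos; eauto|].
    rewrite <- exp_plus. apply exp_le_mono. rewrite S_INR. lra. Qed.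

Lemma poly_Q q L n c : Polyish (fun x => x ^ n * Qp q L (x * c)).
Proof. induction L as [|L IH]; cbn [Qp].
  - destruct (poly_mon n) as [cc Hc]. exists cc; intros x. rewrite Rmult_1_r; apply Hc.
  - destruct (poly_mul_lin (c * q ^ S L) _ IH) as [cc Hc]. exists cc; intros x; rewrite <- Hc; ring. Qed.

Lemma geo_bound q N : 0 < q < 1 -> sum_f_R0 (fun k => q ^ k) N <= 1 / (1 - q).
Proof. intros Hq. rewrite tech3 by lra. unfold Rdiv. apply Rmult_le_compat_r.
  left; apply Rinv_0_lt_compat; lra. pose proof (pow_lt q (S N) ltac:(lra)). lra. Qed.

Lemma quad_bound al be de S : 0 < al -> 0 <= be -> 0 <= de -> 1 <= S -> (be + de) / al <= S ->
  be * S + de <= al * S ^ 2.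
Proof. intros Ha Hb Hd HS HS2.
  assert (be + de <= al * S). { apply (Rmult_le_compat_l al) in HS2; [|lra].
    replace (al * ((be + de) / al)) with (be + de) in HS2 by (field; lra). lra. }
  assert ((be + de) * S <= al * S * S) by (apply Rmult_le_compat_r; lra).
  assert (de <= de * S) by nra. simpl. nra. Qed.

Lemma exponent_ineq b gam I S L n : 0 < b -> 0 <= L -> L + 1 <= S -> gam < b / 2 -> 1 <= S ->
  (Rabs (2 * gam * n + b * I + 2 * b) + Rabs gam * n ^ 2) / (b / 2 - gam) <= S ->
  gam * (S + n) ^ 2 + b * S * (I - S) + b * (L * S - L * (L + 1) / 2) <= - b * (L + 1) - b * S.
Proof. intros Hb HL HLS Hg HS1 HS.
  pose proof (quad_bound (b / 2 - gam) _ _ S ltac:(lra) (Rabs_pos _)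
     (Rmult_le_pos _ _ (Rabs_pos gam) (pow2_ge_0 n)) HS1 HS) as Q.
  assert (A1 : (2 * gam * n + b * I + 2 * b) * S <= Rabs (2 * gam * n + b * I + 2 * b) * S).
  { apply Rmult_le_compat_r; [lra| apply Rle_abs]. }
  assert (A2 : gam * n ^ 2 <= Rabs gam * n ^ 2). { apply Rmult_le_compat_r; [apply pow2_ge_0| apply Rle_abs]. }
  assert (A3 : b * (L * S - L * (L + 1) / 2) <= b * (S * S - S ^ 2 / 2)).
  { apply Rmult_le_compat_l; [lra|]. nra. }
  assert (A4 : - b * (L + 1) >= - b * S) by nra.
  simpl in *. nra. Qed.

Lemma IZR_le_Z (a b : Z) : (a <= b)%Z -> IZR a <= IZR b.
Proof. intros; apply IZR_le; auto. Qed.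

Lemma core_step (q : R) (d : Z -> R) (C0 K gam : R) (N0 : nat) (i : Z) (n : nat) :
  0 < q < 1 -> 0 <= K ->
  (forall n, sumZ (fun j => Ez q (IZR j) ^ n * d j) 0) ->
  (forall N, SZ (fun j => Rabs (d j)) N <= C0) ->
  gam < - ln q / 2 ->
  (forall m j, (N0 <= m)%nat -> Rabs (d j) * Ez q (IZR j) ^ m <= K * exp (gam * INR m ^ 2)) ->
  exists L0, forall L, (L0 <= L)%nat ->
    Rabs (d i) * (Ez q (IZR i) ^ n * Qp q L 1) <=
      Ez q (IZR i + 1) ^ n * C0 + K * q ^ (L + 1) * Ez q (IZR i) * (1 / (1 - q)).
Proof.
  intros Hq HK Hann HC0 Hgam Hgr.
  set (b := - ln q).
  assert (Hb : 0 < b). { unfold b. assert (ln q < 0) by (rewrite <- ln_1; apply ln_increasing; lra). lra. }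
  set (T0 := (Rabs (2 * gam * INR n + b * IZR i + 2 * b) + Rabs gam * INR n ^ 2) / (b / 2 - gam)).
  destruct (INR_archimed 1 T0 ltac:(lra)) as [LT HLT]. rewrite Rmult_1_r in HLT.
  exists (max (max LT N0) (Z.to_nat i)). intros L HL.
  set (pti := Ez q (IZR i)).
  assert (Hpti : 0 < pti) by apply Ez_pos.
  set (e := fun j => d j * (Ez q (IZR j) ^ n * Qp q L (Ez q (IZR j) * / pti))).
  assert (He : sumZ e 0).
  { apply (ann (fun j => Ez q (IZR j)) d (fun x => x ^ n * Qp q L (x * / pti))); auto. apply poly_Q. }
  set (B := fun j => Rabs (d j) * Ez q (IZR i + 1) ^ n +
                     (if Z_lt_dec j 0 then K * q ^ (L + 1) * Ez q (IZR i - IZR j) else 0)).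
  assert (HB0 : forall j, 0 <= B j).
  { intros j; unfold B. apply Rplus_le_le_0_compat.
    apply Rmult_le_pos; [apply Rabs_pos| apply pow_le; left; apply Ez_pos].
    destruct (Z_lt_dec j 0); [|lra]. apply Rmult_le_pos; [apply Rmult_le_pos; [auto| apply pow_le; lra]| left; apply Ez_pos]. }
  assert (Hu : forall j, Ez q (IZR j) * / pti = Ez q (IZR j - IZR i)).
  { intros j; unfold pti; unfold Rminus; rewrite Ez_plus, Ez_opp; auto. }
  assert (Hbound : forall j, j <> i -> Rabs (e j) <= B j).
  { intros j Hji. unfold e, B. rewrite Hu.
    destruct (Z_lt_ge_dec i j) as [Hij|Hij].
    -
      assert (Hv : 0 <= Ez q (IZR j - IZR i) <= 1).
      { split; [left; apply Ez_pos|]. rewrite <- (Ez_0 q). apply Ez_anti; auto.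
        apply IZR_lt in Hij; lra. }
      pose proof (Qp_01 q L _ Hq Hv) as HQ.
      assert (Hz : Ez q (IZR j) ^ n <= Ez q (IZR i + 1) ^ n).
      { apply pow_incr; split; [left; apply Ez_pos|]. apply Ez_anti; auto.
        assert (i + 1 <= j)%Z by lia. apply IZR_le_Z in H. rewrite plus_IZR in H. lra. }
      rewrite Rabs_mult, Rabs_mult, (Rabs_pos_eq (Ez q _ ^ n)) by (apply pow_le; left; apply Ez_pos).
      rewrite (Rabs_pos_eq (Qp _ _ _)) by lra.
      assert (0 <= Rabs (d j)) by apply Rabs_pos.
      assert (0 <= Ez q (IZR j) ^ n) by (apply pow_le; left; apply Ez_pos).
      assert (Rabs (d j) * (Ez q (IZR j) ^ n * Qp q L (Ez q (IZR j - IZR i))) <= Rabs (d j) * Ez q (IZR i + 1) ^ n).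
      { apply Rmult_le_compat_l; auto. rewrite <- (Rmult_1_r (Ez q (IZR i + 1) ^ n)). apply Rmult_le_compat; lra. }
      destruct (Z_lt_dec j 0); [|lra].
      assert (0 <= K * q ^ (L + 1) * Ez q (IZR i - IZR j)).
      { apply Rmult_le_pos; [apply Rmult_le_pos; [auto| apply pow_le; lra]| left; apply Ez_pos]. }
      lra.
    - destruct (Z_le_gt_dec (i - Z.of_nat L) j) as [Hmid|Hlow].
      +
        assert (Hz : Qp q L (Ez q (IZR j - IZR i)) = 0).
        { apply (Qp_zero q L _ (Z.to_nat (i - j))). lia.
          rewrite <- Ez_nat by lra. rewrite <- Ez_plus. rewrite INR_IZR_INZ, Z2Nat.id by lia.
          rewrite minus_IZR. replace (IZR j - IZR i + (IZR i - IZR j)) with 0 by ring. apply Ez_0. }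
        rewrite Hz, !Rmult_0_r, Rabs_R0. apply HB0.
      +
        assert (Hj0 : (j < 0)%Z) by lia.
        destruct (Z_lt_dec j 0) as [_|Hc]; [|lia].
        set (S := IZR i - IZR j).
        assert (HSL : INR L + 1 <= S).
        { unfold S. rewrite INR_IZR_INZ. rewrite <- minus_IZR. rewrite <- plus_IZR. apply IZR_le. lia. }
        set (m := (Z.to_nat (i - j) + n)%nat).
        assert (Hm : INR m = S + INR n).
        { unfold m; rewrite plus_INR, INR_IZR_INZ, Z2Nat.id by lia. unfold S; rewrite minus_IZR; ring. }
        assert (HmN0 : (N0 <= m)%nat) by (unfold m; lia).
        specialize (Hgr m j HmN0).
        set (z := Ez q (IZR j)) in *.
        assert (Hz : 0 < z) by apply Ez_pos.
        assert (Hup : 0 < Ez q (IZR j - IZR i)) by apply Ez_pos.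
        assert (HuL : 1 <= Ez q (IZR j - IZR i) * q ^ L).
        { rewrite <- Ez_nat by lra. rewrite <- Ez_plus, <- (Ez_0 q). apply Ez_anti; auto. fold S.
          replace (IZR j - IZR i) with (- S) by (unfold S; ring). lra. }
        pose proof (Qp_big q L _ Hq Hup HuL) as HQ.
        assert (Hlnu : ln (Ez q (IZR j - IZR i)) = S * b).
        { unfold Ez, b, S. rewrite ln_exp. ring. }
        rewrite Hlnu in HQ.
        rewrite Rabs_mult, Rabs_mult, (Rabs_pos_eq (z ^ n)) by (apply pow_le; lra).
        assert (Hdj : Rabs (d j) <= K * exp (gam * INR m ^ 2) * / z ^ m).
        { assert (0 < z ^ m) by (apply pow_lt; lra).
          apply (Rmult_le_reg_r (z ^ m)); auto. rewrite Rmult_assoc, Rinv_l by lra. lra. }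
        assert (Hzm : z ^ n * / z ^ m = exp (S * b * IZR j)).
        { unfold z. rewrite !Ez_pow, <- Ez_opp, <- Ez_plus. unfold Ez, b. f_equal. rewrite Hm. ring. }
        assert (Htarget : K * exp (gam * INR m ^ 2) * / z ^ m * (z ^ n * exp (INR L * (S * b) + ln q * (INR L * (INR L + 1) / 2)))
                  <= K * q ^ (L + 1) * Ez q (IZR i - IZR j)).
        { replace (K * exp (gam * INR m ^ 2) * / z ^ m * (z ^ n * exp (INR L * (S * b) + ln q * (INR L * (INR L + 1) / 2))))
            with (K * (exp (gam * INR m ^ 2) * (z ^ n * / z ^ m) * exp (INR L * (S * b) + ln q * (INR L * (INR L + 1) / 2)))) by ring.
          rewrite Hzm, <- !exp_plus, <- (Ez_nat q (L + 1)) by lra. rewrite (Rmult_assoc K (Ez q (INR (L + 1))) (Ez q (IZR i - IZR j))). apply Rmult_le_compat_l; auto.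
          unfold Ez. rewrite <- exp_plus. apply exp_le_mono. fold S.
          replace (ln q) with (- b) by (unfold b; ring). rewrite Hm, plus_INR. simpl INR.
          assert (HIj : IZR j = IZR i - S) by (unfold S; ring).
          rewrite HIj.
          assert (HT0 : T0 <= S).
          { assert (INR LT <= INR L) by (apply le_INR; lia). lra. }
          pose proof (exponent_ineq b gam (IZR i) S (INR L) (INR n) Hb (pos_INR L) HSL ltac:(unfold b in *; lra)
                        ltac:(pose proof (pos_INR L); lra) HT0) as EI.
          nra. }
        assert (0 <= Rabs (Qp q L (Ez q (IZR j - IZR i)))) by apply Rabs_pos.
        assert (0 <= z ^ n) by (apply pow_le; lra).
        assert (0 <= Rabs (d j) * Ez q (IZR i + 1) ^ n).
        { apply Rmult_le_pos; [apply Rabs_pos| apply pow_le; left; apply Ez_pos]. }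
        assert (X : Rabs (d j) * (z ^ n * Rabs (Qp q L (Ez q (IZR j - IZR i)))) <=
           K * exp (gam * INR m ^ 2) * / z ^ m * (z ^ n * exp (INR L * (S * b) + ln q * (INR L * (INR L + 1) / 2)))).
        { apply Rmult_le_compat; auto. apply Rabs_pos. apply Rmult_le_pos; auto. apply Rmult_le_compat_l; auto. }
        fold S in Htarget. lra. }
  assert (HT : forall N, SZ B N <= Ez q (IZR i + 1) ^ n * C0 + K * q ^ (L + 1) * Ez q (IZR i) * (1 / (1 - q))).
  { intros N. unfold B. rewrite SZ_plus. apply Rplus_le_compat.
    - assert (E : SZ (fun j => Rabs (d j) * Ez q (IZR i + 1) ^ n) N = Ez q (IZR i + 1) ^ n * SZ (fun j => Rabs (d j)) N).
      { rewrite <- SZ_scal; unfold SZ; f_equal; apply sum_eq; intros; ring. }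
      rewrite E. apply Rmult_le_compat_l; [apply pow_le; left; apply Ez_pos| apply (HC0 N)].
    - unfold SZ. rewrite (sum_eq _ (fun _ => 0)).
      2:{ intros k _. destruct (Z_lt_dec (Z.of_nat k) 0); [lia|auto]. }
      rewrite sum_cte, Rmult_0_l, Rplus_0_l.
      rewrite (sum_eq _ (fun k => (K * q ^ (L + 1) * Ez q (IZR i) * q) * q ^ k)).
      2:{ intros k _. destruct (Z_lt_dec (- Z.of_nat k - 1) 0); [|lia].
          rewrite minus_IZR, opp_IZR, <- INR_IZR_INZ.
          replace (IZR i - (- INR k - 1)) with (IZR i + INR (S k)) by (rewrite S_INR; ring).
          rewrite Ez_plus, Ez_nat by lra. simpl; ring. }
      replace (sum_f_R0 (fun k => K * q ^ (L + 1) * Ez q (IZR i) * q * q ^ k) N) with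
        (K * q ^ (L + 1) * Ez q (IZR i) * q * sum_f_R0 (fun k => q ^ k) N) by (rewrite scal_sum; apply sum_eq; intros; ring).
      pose proof (geo_bound q N Hq).
      assert (0 <= K * q ^ (L + 1) * Ez q (IZR i)).
      { apply Rmult_le_pos; [apply Rmult_le_pos; [auto| apply pow_le; lra]| left; apply Ez_pos]. }
      assert (0 <= sum_f_R0 (fun k => q ^ k) N).
      { apply cond_pos_sum; intros; apply pow_le; lra. }
      assert (0 < 1 / (1 - q)) by (apply Rdiv_lt_0_compat; lra).
      set (cc := K * q ^ (L + 1) * Ez q (IZR i)) in *. set (ss := sum_f_R0 (fun k => q ^ k) N) in *.
      assert (cc * q * ss <= cc * ss). { rewrite Rmult_assoc. apply Rmult_le_compat_l; auto. nra. }
      assert (cc * ss <= cc * (1 / (1 - q))) by (apply Rmult_le_compat_l; auto).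
      lra. }
  pose proof (sumZ_iso_bound e B 0 _ i He HB0 Hbound HT) as R.
  unfold e in R. rewrite Hu, Rminus_diag, Ez_0, Rminus_0_l, Rabs_Ropp, Rabs_mult in R.
  rewrite (Rabs_pos_eq (Ez q (IZR i) ^ n * _)) in R. exact R.
  apply Rmult_le_pos. apply pow_le; left; apply Ez_pos.
  pose proof (Qp_low q L Hq). pose proof (exp_pos (- (q / (1 - q) ^ 2))). lra.
Qed.

Lemma lim_pow_le q X Y Z L0 : 0 < q < 1 -> 0 <= Z -> (forall k, (L0 <= k)%nat -> X <= Y + Z * q ^ k) -> X <= Y.
Proof. intros Hq HZ H. destruct (Rle_dec X Y) as [|Hn]; auto. exfalso.
  destruct (pow_lt_1_zero q ltac:(rewrite Rabs_pos_eq; lra) ((X - Y) / (Z + 1))) as [N HN].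
  { apply Rdiv_lt_0_compat; lra. }
  specialize (HN (max N L0) ltac:(lia)). specialize (H (max N L0) ltac:(lia)).
  rewrite Rabs_pos_eq in HN by (apply pow_le; lra).
  assert (Z * q ^ max N L0 <= Z * ((X - Y) / (Z + 1))) by (apply Rmult_le_compat_l; lra).
  assert (Z * ((X - Y) / (Z + 1)) < X - Y).
  { apply (Rmult_lt_reg_r (Z + 1)); [lra|]. replace (Z * ((X - Y) / (Z + 1)) * (Z + 1)) with (Z * (X - Y)) by (field; lra). nra. }
  lra. Qed.

Lemma core (q : R) (d : Z -> R) (C0 K gam : R) (N0 : nat) :
  0 < q < 1 -> 0 <= K ->
  (forall n, sumZ (fun j => Ez q (IZR j) ^ n * d j) 0) ->
  (forall N, SZ (fun j => Rabs (d j)) N <= C0) ->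
  gam < - ln q / 2 ->
  (forall m j, (N0 <= m)%nat -> Rabs (d j) * Ez q (IZR j) ^ m <= K * exp (gam * INR m ^ 2)) ->
  forall i, d i = 0.
Proof.
  intros Hq HK Hann HC0 Hgam Hgr i.
  set (c := exp (- (q / (1 - q) ^ 2))).
  assert (Hc : 0 < c) by apply exp_pos.
  assert (HC0p : 0 <= C0). { eapply Rle_trans; [|apply (HC0 0%nat)]. apply SZ_nonneg; intros; apply Rabs_pos. }
  assert (Step : forall n, Rabs (d i) * c <= 0 + C0 * q ^ n).
  { intros n. destruct (core_step q d C0 K gam N0 i n Hq HK Hann HC0 Hgam Hgr) as [L0 HL0].
    set (pti := Ez q (IZR i)).
    assert (Hp : 0 < pti ^ n) by (apply pow_lt, Ez_pos).
    assert (Hi1 : Ez q (IZR i + 1) = pti * q). { unfold pti. rewrite Ez_plus. f_equal. unfold Ez. rewrite Rmult_1_l, exp_ln; lra. }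
    assert (Hk : forall k, (S L0 <= k)%nat -> Rabs (d i) * c * pti ^ n <= pti ^ n * q ^ n * C0 + (K * pti * (1 / (1 - q))) * q ^ k).
    { intros k Hk. specialize (HL0 (k - 1)%nat ltac:(lia)). replace (k - 1 + 1)%nat with k in HL0 by lia.
      rewrite Hi1, Rpow_mult_distr in HL0. fold pti in HL0.
      pose proof (Qp_low q (k - 1) Hq). fold c in H.
      assert (Rabs (d i) * c * pti ^ n <= Rabs (d i) * (pti ^ n * Qp q (k - 1) 1)).
      { rewrite Rmult_assoc, (Rmult_comm c). apply Rmult_le_compat_l; [apply Rabs_pos|]. apply Rmult_le_compat_l; lra. }
      lra. }
    assert (0 <= K * pti * (1 / (1 - q))).
    { apply Rmult_le_pos. apply Rmult_le_pos; auto. left; apply Ez_pos. left; apply Rdiv_lt_0_compat; lra. }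
    pose proof (lim_pow_le q _ _ _ _ Hq H Hk) as G.
    apply (Rmult_le_reg_r (pti ^ n)); auto. lra. }
  assert (G : Rabs (d i) * c <= 0) by (apply (lim_pow_le q _ _ _ 0 Hq HC0p); intros; apply Step).
  assert (Rabs (d i) <= 0).
  { apply (Rmult_le_reg_r c); auto. lra. }
  pose proof (Rabs_pos (d i)). destruct (Req_dec (d i) 0); auto.
  pose proof (Rabs_pos_lt (d i) H1). lra.
Qed.

Lemma neg_bound (F : R -> R) (n : nat) (mu r : R) :
  (forall x y, x <= y -> F x <= F y) -> (forall x, F x <= 1) -> (forall x, 0 <= F x) -> 1 < r ->
  is_moment F (S n) mu ->
  0 <= mu + 1 /\ forall N, sum_f_R0 (fun k => (r ^ S k) ^ (S n) * (F (r ^ S k) - F (r ^ k))) N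
     <= r ^ (S n) + r ^ (2 * S n) / (INR (S n) * (r - 1)) * (mu + 1).
Proof.
  intros Fm F1 F0 Hr [pr Hpr].
  set (phi := fun x => INR (S n) * x ^ (S n - 1) * (1 - F x)) in *.
  assert (Hphi : forall x, 0 <= x -> 0 <= phi x).
  { intros x Hx; unfold phi. apply Rmult_le_pos; [apply Rmult_le_pos; [apply pos_INR| apply pow_le; auto]|]. specialize (F1 x); lra. }
  assert (A : forall b, 0 <= b -> 0 <= RiemannInt (pr b)).
  { intros b Hb. apply Rle_trans with (RiemannInt (RiemannInt_P14 0 b 0)).
    right; rewrite RiemannInt_P15; ring.
    apply RiemannInt_P19; auto. intros x Hx; unfold fct_cte; apply Hphi; lra. }
  assert (B : forall u v, 0 <= u <= v -> RiemannInt (pr u) + INR (S n) * u ^ (S n - 1) * (v - u) * (1 - F v) <= RiemannInt (pr v)).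
  { intros u v Huv. set (pruv := RiemannInt_P24 (RiemannInt_P1 (pr u)) (pr v)).
    rewrite <- (RiemannInt_P26 (pr u) pruv (pr v)). apply Rplus_le_compat_l.
    set (c := INR (S n) * u ^ (S n - 1) * (1 - F v)).
    replace (INR (S n) * u ^ (S n - 1) * (v - u) * (1 - F v)) with (c * (v - u)) by (unfold c; ring).
    apply Rle_trans with (RiemannInt (RiemannInt_P14 u v c)). right; rewrite RiemannInt_P15; ring.
    apply RiemannInt_P19; try lra.
    intros x Hx. unfold fct_cte, c, phi.
    assert (u ^ (S n - 1) <= x ^ (S n - 1)) by (apply pow_incr; lra).
    assert (F x <= F v) by (apply Fm; lra). pose proof (F1 v). pose proof (pos_INR (S n)).
    pose proof (pow_le u (S n - 1) ltac:(lra)).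
    apply Rmult_le_compat; try lra. apply Rmult_le_pos; lra. apply Rmult_le_compat_l; lra. }
  assert (C : forall b, 0 <= b -> RiemannInt (pr b) <= mu + 1).
  { intros b Hb. destruct (Hpr 1 ltac:(lra)) as [B0 HB0]. specialize (HB0 (Rmax b B0) (Rmax_r _ _)).
    pose proof (B b (Rmax b B0) (conj Hb (Rmax_l _ _))).
    assert (0 <= INR (S n) * b ^ (S n - 1) * (Rmax b B0 - b) * (1 - F (Rmax b B0))).
    { pose proof (Rmax_l b B0). pose proof (F1 (Rmax b B0)).
      apply Rmult_le_pos; [apply Rmult_le_pos; [apply Rmult_le_pos; [apply pos_INR| apply pow_le; lra]| lra]| lra]. }
    apply Rabs_def2 in HB0. lra. }
  assert (Hmu : 0 <= mu + 1) by (pose proof (A 0 (Rle_refl 0)); pose proof (C 0 (Rle_refl 0)); lra).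
  split; auto.
  set (T := fun k => INR (S n) * (r ^ k) ^ (S n - 1) * (r ^ S k - r ^ k) * (1 - F (r ^ S k))).
  assert (Hrk : forall k, 0 <= r ^ k <= r ^ S k).
  { intros k; split. apply pow_le; lra. simpl. pose proof (pow_le r k ltac:(lra)). nra. }
  assert (D : forall N, sum_f_R0 T N <= RiemannInt (pr (r ^ S N))).
  { induction N as [|N IH].
    - simpl sum_f_R0. pose proof (B (r ^ 0) (r ^ 1) (Hrk 0%nat)). pose proof (A (r ^ 0) (pow_le r 0 ltac:(lra))).
      unfold T. lra.
    - cbn [sum_f_R0]. pose proof (B (r ^ S N) (r ^ S (S N)) (Hrk (S N))). unfold T at 2. lra. }
  set (Cc := r ^ (2 * S n) / (INR (S n) * (r - 1))).
  assert (HCc : 0 <= Cc).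
  { unfold Cc. apply Rmult_le_pos. apply pow_le; lra. left; apply Rinv_0_lt_compat.
    apply Rmult_lt_0_compat; [apply lt_0_INR; lia| lra]. }
  assert (E : forall k, (r ^ S (S k)) ^ S n * (F (r ^ S (S k)) - F (r ^ S k)) <= Cc * T k).
  { intros k. assert (Heq : Cc * T k = (r ^ S (S k)) ^ S n * (1 - F (r ^ S k))).
    { unfold Cc, T. replace (S n - 1)%nat with n by lia. replace (2 * S n)%nat with (S n + S n)%nat by lia.
      rewrite pow_add. change (r ^ S (S k)) with (r * (r * r ^ k)). change (r ^ S k) with (r * r ^ k).
      set (x := r ^ k). rewrite !Rpow_mult_distr. change (x ^ S n) with (x * x ^ n).
      field. split. lra. apply not_0_INR; lia. }
    rewrite Heq. apply Rmult_le_compat_l. apply pow_le, pow_le; lra. pose proof (F1 (r ^ S (S k))). lra. }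
  intros N. destruct N as [|N].
  - cbn [sum_f_R0]. pose proof (F1 (r ^ 1)). pose proof (F0 (r ^ 0)).
    assert (0 <= (r ^ 1) ^ S n) by (apply pow_le, pow_le; lra).
    assert ((r ^ 1) ^ S n * (F (r ^ 1) - F (r ^ 0)) <= (r ^ 1) ^ S n * 1) by (apply Rmult_le_compat_l; lra).
    rewrite pow_1 in *. assert (0 <= Cc * (mu + 1)) by nra. lra.
  - rewrite decomp_sum by lia. simpl pred.
    assert (sum_f_R0 (fun i => (r ^ S (S i)) ^ S n * (F (r ^ S (S i)) - F (r ^ S i))) N <= Cc * sum_f_R0 T N).
    { rewrite scal_sum. apply sum_Rle; intros. eapply Rle_trans; [apply E| right; ring]. }
    assert (Cc * sum_f_R0 T N <= Cc * (mu + 1)).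
    { apply Rmult_le_compat_l; auto. eapply Rle_trans; [apply D| apply C]. apply pow_le; lra. }
    pose proof (F1 (r ^ 1)). pose proof (F0 (r ^ 0)).
    assert (0 <= (r ^ 1) ^ S n) by (apply pow_le, pow_le; lra).
    assert ((r ^ 1) ^ S n * (F (r ^ 1) - F (r ^ 0)) <= (r ^ 1) ^ S n * 1) by (apply Rmult_le_compat_l; lra).
    rewrite pow_1 in *.
    fold Cc. lra.
Qed.

Lemma cdf_mono F : is_cdf F -> forall x y, x <= y -> F x <= F y.
Proof. intros [H _]; exact H. Qed.

Lemma cdf_le1 F : is_cdf F -> forall x, F x <= 1.
Proof. intros HF x. destruct (Rle_dec (F x) 1) as [|Hn]; auto. exfalso.
  destruct HF as (Hm & _ & _ & Hinf). destruct (Hinf (F x - 1) ltac:(lra)) as [M HM].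
  specialize (HM (Rmax x M) (Rmax_r _ _)). pose proof (Hm x (Rmax x M) (Rmax_l _ _)).
  apply Rabs_def2 in HM. lra. Qed.

Lemma cdf_ge0 F : is_cdf F -> nonneg_cdf F -> forall x, 0 <= F x.
Proof. intros HF Hn x. destruct (Rlt_dec x 0) as [Hx|Hx]. rewrite Hn; lra.
  rewrite <- (Hn (-1)) by lra. apply (cdf_mono F HF); lra. Qed.

Lemma cdf_F0 F : is_cdf F -> nonneg_cdf F -> abs_cont_cdf F -> F 0 = 0.
Proof. intros HF Hn Hac. pose proof (cdf_ge0 F HF Hn 0).
  destruct (Rle_dec (F 0) 0) as [|Hp]; [lra|]. exfalso.
  destruct (Hac (F 0) ltac:(lra)) as (delta & Hd & Hdel).
  specialize (Hdel 1%nat (fun _ => - delta / 2) (fun _ => 0)).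
  simpl in Hdel. rewrite (Hn (- delta / 2)) in Hdel by lra.
  assert (X : 0 + Rabs (F 0 - 0) < F 0). { apply Hdel. intros; lra. intros; lia. lra. }
  rewrite Rminus_0_r, Rabs_pos_eq in X by lra. lra. Qed.

Lemma cdf_right0 F : is_cdf F -> nonneg_cdf F -> abs_cont_cdf F ->
  forall eps, 0 < eps -> exists d, 0 < d /\ forall y, 0 <= y < d -> F y < eps.
Proof. intros HF Hn Hac eps He. pose proof (cdf_F0 F HF Hn Hac) as H0.
  destruct HF as (_ & Hr & _). destruct (Hr 0 eps He) as (d & Hd & Hy).
  exists d; split; auto. intros y Hy'. specialize (Hy y ltac:(lra)). rewrite H0, Rminus_0_r in Hy.
  apply Rabs_def2 in Hy. lra. Qed.

Lemma telescope (g : nat -> R) N : sum_f_R0 (fun k => g k - g (S k)) N = g 0%nat - g (S N).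
Proof. induction N as [|N IH]; simpl; [ring|]. rewrite IH; ring. Qed.

Definition fd (q : R) (F : R -> R) (t : R) : R := (F t - F (q * t)) / (t * (1 - q)).

Lemma qdens_f q F : 0 < q < 1 -> is_cdf F -> nonneg_cdf F -> abs_cont_cdf F -> q_density q F (fd q F).
Proof. intros Hq HF Hn Hac x Hx. unfold jackson0.
  apply (isum_ext (fun j => F (x * q ^ j) - F (x * q ^ S j))).
  { intros j. unfold fd. replace (q * (x * q ^ j)) with (x * q ^ S j) by (simpl; ring).
    assert (0 < q ^ j) by (apply pow_lt; lra). field. split; [lra|]. split; lra. }
  intros eps He. destruct (cdf_right0 F HF Hn Hac eps He) as (d & Hd & Hy).
  destruct (pow_lt_1_zero q ltac:(rewrite Rabs_pos_eq; lra) (d / x) ltac:(apply Rdiv_lt_0_compat; lra)) as [N HN].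
  exists N. intros m Hm. rewrite (telescope (fun j => F (x * q ^ j))). simpl pow at 1. rewrite Rmult_1_r.
  unfold Rdist. replace (F x - F (x * q ^ S m) - F x) with (- F (x * q ^ S m)) by ring.
  rewrite Rabs_Ropp. specialize (HN (S m) ltac:(lia)). rewrite Rabs_pos_eq in HN by (apply pow_le; lra).
  assert (0 <= q ^ S m) by (apply pow_le; lra).
  assert (x * q ^ S m < d). { apply (Rmult_lt_compat_l x) in HN; auto. replace (x * (d / x)) with d in HN by (field; lra). lra. }
  rewrite Rabs_pos_eq by (apply (cdf_ge0 F HF Hn)). apply Hy. split; [apply Rmult_le_pos|]; lra. Qed.

Lemma isum_shift (s : nat -> R) l l' : infinite_sum s l -> infinite_sum (fun j => s (S j)) l' -> l = s 0%nat + l'.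
Proof. intros H1 H2. apply (isum_unique s); auto.
  intros eps He. destruct (H2 eps He) as [N HN]. exists (S N). intros n Hn.
  destruct n as [|n]; [lia|]. rewrite decomp_sum by lia. simpl pred. unfold Rdist.
  replace (s 0%nat + sum_f_R0 (fun i => s (S i)) n - (s 0%nat + l')) with (sum_f_R0 (fun i => s (S i)) n - l') by ring.
  apply HN; lia. Qed.

Lemma dens_diff q G g : 0 < q < 1 -> q_density q G g -> forall x, 0 < x -> G x - G (q * x) = x * (1 - q) * g x.
Proof. intros Hq Hg x Hx. pose proof (Hg x Hx) as H1. pose proof (Hg (q * x) ltac:(nra)) as H2.
  unfold jackson0 in *.
  assert (H2' : infinite_sum (fun j => (fun j => x * (1 - q) * g (x * q ^ j) * q ^ j) (S j)) (G (q * x))).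
  { eapply isum_ext; [|exact H2]. intros j; cbv beta. change (q ^ S j) with (q * q ^ j).
    assert (EE : q * x * q ^ j = x * (q * q ^ j)) by ring. rewrite EE. ring. }
  rewrite (isum_shift _ _ _ H1 H2'). cbv beta. rewrite pow_O, !Rmult_1_r. ring. Qed.

Definition pp (q : R) (F : R -> R) (j : Z) : R := F (Ez q (IZR j)) - F (q * Ez q (IZR j)).

Lemma hf_eq q F n j : 0 < q < 1 ->
  (1 - q) * powerRZ q (j * Z.of_nat (S n)) * fd q F (powerRZ q j) = Ez q (IZR j) ^ n * pp q F j.
Proof. intros Hq. rewrite !powerRZ_Ez by lra. rewrite mult_IZR, <- INR_IZR_INZ.
  replace (Ez q (IZR j * INR (S n))) with (Ez q (IZR j) ^ S n) by (rewrite Ez_pow; f_equal; ring).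
  unfold fd, pp. pose proof (Ez_pos q (IZR j)). simpl pow. field. split; lra. Qed.

Lemma hg_eq q G g n j : 0 < q < 1 -> q_density q G g ->
  (1 - q) * powerRZ q (j * Z.of_nat (S n)) * g (powerRZ q j) = Ez q (IZR j) ^ n * pp q G j.
Proof. intros Hq Hg. rewrite !powerRZ_Ez by lra. rewrite mult_IZR, <- INR_IZR_INZ.
  replace (Ez q (IZR j * INR (S n))) with (Ez q (IZR j) ^ S n) by (rewrite Ez_pow; f_equal; ring).
  unfold pp. pose proof (Ez_pos q (IZR j)). rewrite (dens_diff q G g Hq Hg) by auto. simpl pow. ring. Qed.

Lemma pt_pos_side q k : 0 < q -> Ez q (IZR (Z.of_nat k)) = q ^ k.
Proof. intros; rewrite <- INR_IZR_INZ; apply Ez_nat; auto. Qed.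

Lemma pt_neg_side q k : 0 < q -> Ez q (IZR (- Z.of_nat k - 1)) = (/ q) ^ S k.
Proof. intros Hq. rewrite minus_IZR, opp_IZR, <- INR_IZR_INZ.
  replace (- INR k - 1) with (- INR (S k)) by (rewrite S_INR; ring).
  rewrite Ez_opp, Ez_nat, pow_inv; auto. Qed.

Lemma nonneg_series_cv (a : nat -> R) M : (forall k, 0 <= a k) -> (forall N, sum_f_R0 a N <= M) ->
  exists l, infinite_sum a l /\ l <= M.
Proof. intros H0 HM. destruct (growing_cv (sum_f_R0 a)) as [l Hl].
  - intros n; simpl; pose proof (H0 (S n)); lra.
  - exists M; intros x [i ->]; auto.
  - exists l; split; auto. apply (cv_le_bound _ _ _ 0%nat Hl); auto. Qed.

Lemma final_ineq r mu1 m : 1 < r -> 0 <= mu1 -> (1 <= m)%nat ->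
  1 + r ^ m + r ^ (2 * m) / (INR m * (r - 1)) * mu1 <= r ^ (2 * m) * (2 + mu1 / (r - 1)).
Proof. intros Hr Hmu Hm.
  assert (1 <= r ^ m) by (rewrite <- (pow1 m); apply pow_incr; lra).
  assert (r ^ m <= r ^ (2 * m)) by (apply Rle_pow; lia || lra).
  assert (HI : 1 <= INR m) by (apply (le_INR 1); auto).
  assert (r ^ (2 * m) / (INR m * (r - 1)) * mu1 <= r ^ (2 * m) * (mu1 / (r - 1))).
  { unfold Rdiv. rewrite Rinv_mult. 
    assert (/ INR m <= 1) by (rewrite <- Rinv_1; apply Rinv_le_contravar; lra).
    assert (0 < / (r - 1)) by (apply Rinv_0_lt_compat; lra).
    assert (0 <= r ^ (2 * m)) by lra.
    assert (0 < / INR m) by (apply Rinv_0_lt_compat; lra).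
    replace (r ^ (2 * m) * (/ INR m * / (r - 1)) * mu1) with ((r ^ (2 * m) * / (r - 1) * mu1) * / INR m) by ring.
    replace (r ^ (2 * m) * (mu1 * / (r - 1))) with ((r ^ (2 * m) * / (r - 1) * mu1) * 1) by ring.
    apply Rmult_le_compat_l; auto. apply Rmult_le_pos; [apply Rmult_le_pos|]; lra. }
  lra. Qed.

Lemma mom_f q F mu : 0 < q < 1 -> is_cdf F -> nonneg_cdf F ->
  (forall n, (1 <= n)%nat -> is_moment F n (mu n)) ->
  forall n, exists m, sumZ (fun j => Ez q (IZR j) ^ n * pp q F j) m /\
    (forall nn, n = S nn -> m <= (/ q) ^ (2 * S nn) * (2 + (mu (S nn) + 1) / (/ q - 1))).
Proof.
  intros Hq HF Hn Hmom n.
  pose proof (cdf_mono F HF) as Fm. pose proof (cdf_le1 F HF) as F1. pose proof (cdf_ge0 F HF Hn) as F0.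
  set (r := / q). assert (Hr : 1 < r) by (unfold r; rewrite <- Rinv_1; apply Rinv_lt_contravar; lra).
  assert (Hpp : forall j, 0 <= pp q F j).
  { intros j; unfold pp. pose proof (Ez_pos q (IZR j)). assert (q * Ez q (IZR j) <= Ez q (IZR j)) by nra.
    pose proof (Fm _ _ H0). lra. }
  destruct (nonneg_series_cv (fun k => Ez q (IZR (Z.of_nat k)) ^ n * pp q F (Z.of_nat k)) 1) as (l1 & Hl1 & Hl1b).
  { intros k; apply Rmult_le_pos; [apply pow_le; left; apply Ez_pos| auto]. }
  { intros N. eapply Rle_trans.
    - apply (sum_Rle _ (fun k => F (q ^ k) - F (q ^ S k))). intros k _.
      rewrite pt_pos_side by lra. unfold pp. rewrite pt_pos_side by lra. change (q * q ^ k) with (q ^ S k).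
      assert (0 <= F (q ^ k) - F (q ^ S k)). { assert (F (q ^ S k) <= F (q ^ k)); [apply Fm; simpl; pose proof (pow_le q k ltac:(lra)); nra | lra]. }
      rewrite <- (Rmult_1_l (F (q ^ k) - F (q ^ S k))) at 2. apply Rmult_le_compat_r; auto.
      apply pow_le1. split. apply pow_le; lra. apply pow_le1; lra.
    - rewrite (telescope (fun k => F (q ^ k))). pose proof (F0 (q ^ S N)). pose proof (F1 (q ^ 0)). lra. }
  set (bterm := fun k => Ez q (IZR (- Z.of_nat k - 1)) ^ n * pp q F (- Z.of_nat k - 1)).
  assert (Hb : forall k, bterm k = (r ^ S k) ^ n * (F (r ^ S k) - F (r ^ k))).
  { intros k; unfold bterm, pp. rewrite pt_neg_side by lra. fold r. f_equal. f_equal. f_equal.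
    unfold r. simpl. field. lra. }
  assert (Hb0 : forall k, 0 <= bterm k).
  { intros; apply Rmult_le_pos; [apply pow_le; left; apply Ez_pos| auto]. }
  destruct n as [|nn].
  - destruct (nonneg_series_cv bterm 1 Hb0) as (l2 & Hl2 & _).
    { intros N. rewrite (sum_eq _ (fun k => (fun k => - F (r ^ k)) k - (fun k => - F (r ^ k)) (S k))).
      rewrite telescope. pose proof (F0 (r ^ 0)). pose proof (F1 (r ^ S N)). lra.
      intros k _; rewrite Hb; simpl; ring. }
    exists (l1 + l2); split. exists l1, l2; auto. intros nn Hnn; discriminate.
  - destruct (neg_bound F nn (mu (S nn)) r Fm F1 F0 Hr (Hmom (S nn) ltac:(lia))) as [Hmu HN].
    destruct (nonneg_series_cv bterm (r ^ S nn + r ^ (2 * S nn) / (INR (S nn) * (r - 1)) * (mu (S nn) + 1)) Hb0) as (l2 & Hl2 & Hl2b).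
    { intros N. rewrite (sum_eq _ _ N (fun k _ => Hb k)). apply HN. }
    exists (l1 + l2); split. exists l1, l2; auto.
    intros mm Hmm; injection Hmm; intros <-.
    pose proof (final_ineq r (mu (S nn) + 1) (S nn) Hr Hmu ltac:(lia)). fold r. lra.
Qed.

Theorem proposition4 (F : R -> R) (mu : nat -> R) (q0 : R) :
  is_cdf F -> nonneg_cdf F -> abs_cont_cdf F ->
  (forall n, (1 <= n)%nat -> is_moment F n (mu n)) ->
  0 < q0 <= 1 ->
  is_limsup (fun n => ln (mu n) / (INR n ^ 2)) (ln (1 / q0) / 2) ->
  forall q, 0 < q < q0 -> q_moment_determinate q F.
Proof.
  intros HF Hn Hac Hmom Hq0 Hls q Hq.
  assert (Hq1 : 0 < q < 1) by lra.
  exists (fd q F). split; [apply qdens_f; auto|].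
  pose proof (mom_f q F mu Hq1 HF Hn Hmom) as HMf.
  split.
  { intros n. destruct (HMf n) as [m [Hm _]]. exists m. unfold q_moment.
    eapply sumZ_ext; [|exact Hm]. intros j; symmetry; apply hf_eq; auto. }
  intros G g HG Hg Hmm.
  assert (Hpf : forall n m, q_moment q (fd q F) n m -> sumZ (fun j => Ez q (IZR j) ^ n * pp q F j) m).
  { intros n m H. eapply sumZ_ext; [|exact H]. intros j; apply hf_eq; auto. }
  assert (Hpg : forall n m, q_moment q g n m -> sumZ (fun j => Ez q (IZR j) ^ n * pp q G j) m).
  { intros n m H. eapply sumZ_ext; [|exact H]. intros j; apply hg_eq; auto. }
  pose proof (cdf_mono G HG) as Gm. pose proof (cdf_mono F HF) as Fm.
  assert (HppF : forall j, 0 <= pp q F j).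
  { intros j; unfold pp. pose proof (Ez_pos q (IZR j)). assert (q * Ez q (IZR j) <= Ez q (IZR j)) by nra.
    pose proof (Fm _ _ H0). lra. }
  assert (HppG : forall j, 0 <= pp q G j).
  { intros j; unfold pp. pose proof (Ez_pos q (IZR j)). assert (q * Ez q (IZR j) <= Ez q (IZR j)) by nra.
    pose proof (Gm _ _ H0). lra. }
  assert (Hnn : forall n j, 0 <= Ez q (IZR j) ^ n) by (intros; apply pow_le; left; apply Ez_pos).
  set (d := fun j => pp q F j - pp q G j).
  assert (Hann : forall n, sumZ (fun j => Ez q (IZR j) ^ n * d j) 0).
  { intros n. destruct (Hmm n) as [m [H1 H2]].
    pose proof (sumZ_plus _ _ _ _ (Hpf n m H1) (sumZ_scal _ _ (-1) (Hpg n m H2))) as S.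
    replace (m + -1 * m) with 0 in S by ring. eapply sumZ_ext; [|exact S]. intros j; unfold d; ring. }
  destruct (Hmm 0%nat) as [m0 [H01 H02]].
  assert (HC0 : forall N, SZ (fun j => Rabs (d j)) N <= m0 + m0).
  { intros N. eapply Rle_trans.
    - apply (SZ_le _ (fun j => Ez q (IZR j) ^ 0 * pp q F j + Ez q (IZR j) ^ 0 * pp q G j)).
      intros j; unfold d; simpl pow; rewrite !Rmult_1_l.
      pose proof (HppF j); pose proof (HppG j). unfold Rabs; destruct Rcase_abs; lra.
    - rewrite SZ_plus. apply Rplus_le_compat.
      apply (sumZ_nonneg_le _ _ (Hpf 0%nat m0 H01)); intros; apply Rmult_le_pos; auto.
      apply (sumZ_nonneg_le _ _ (Hpg 0%nat m0 H02)); intros; apply Rmult_le_pos; auto. }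
  set (a := - ln q0). set (b := - ln q).
  assert (Hab : a < b). { unfold a, b. apply Ropp_lt_contravar. apply ln_increasing; lra. }
  assert (Ha : 0 <= a). { unfold a. destruct (Req_dec q0 1) as [->|H1]. rewrite ln_1; lra.
    assert (ln q0 < 0) by (rewrite <- ln_1; apply ln_increasing; lra). lra. }
  set (eps := (b - a) / 8).
  assert (Heps : 0 < eps) by (unfold eps; lra).
  destruct (Hls eps Heps) as [[N1 HN1] _].
  assert (Hl1q : ln (1 / q0) = a). { unfold a, Rdiv. rewrite Rmult_1_l, ln_Rinv; lra. }
  set (r := / q). assert (Hr : 1 < r) by (unfold r; rewrite <- Rinv_1; apply Rinv_lt_contravar; lra).
  assert (Hlnr : ln r = b) by (unfold r, b; rewrite ln_Rinv; lra).
  set (K := 2 * (2 + 2 / (r - 1))).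
  assert (HK : 0 <= K). { unfold K. assert (0 < 2 / (r - 1)) by (apply Rdiv_lt_0_compat; lra). lra. }
  set (gam := a / 2 + 2 * eps).
  assert (Hgam : gam < - ln q / 2) by (fold b; unfold gam, eps; lra).
  destruct (INR_archimed eps (2 * b) Heps) as [nA HnA].
  set (N0 := max (max nA N1) 1).
  assert (Hgr : forall m j, (N0 <= m)%nat -> Rabs (d j) * Ez q (IZR j) ^ m <= K * exp (gam * INR m ^ 2)).
  { intros m j Hm.
    destruct m as [|mm]; [unfold N0 in Hm; lia|].
    destruct (Hmm (S mm)) as [M [H1 H2]].
    destruct (HMf (S mm)) as [M' [HM' HMb]].
    pose proof (sumZ_unique _ _ _ (Hpf _ _ H1) HM') as EM. subst M'.
    specialize (HMb mm eq_refl).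
    pose proof (sumZ_term_le _ _ (Hpf _ _ H1) ltac:(intros; apply Rmult_le_pos; auto) j) as T1.
    pose proof (sumZ_term_le _ _ (Hpg _ _ H2) ltac:(intros; apply Rmult_le_pos; auto) j) as T2.
    cbv beta in T1, T2.
    assert (Hd : Rabs (d j) * Ez q (IZR j) ^ S mm <= 2 * M).
    { assert (Rabs (d j) <= pp q F j + pp q G j).
      { unfold d. pose proof (HppF j); pose proof (HppG j). unfold Rabs; destruct Rcase_abs; lra. }
      pose proof (Hnn (S mm) j). nra. }
    set (x := INR (S mm)).
    assert (Hx : 1 <= x) by (unfold x; apply (le_INR 1); lia).
    set (E := exp ((a / 2 + eps) * x ^ 2)).
    assert (HE1 : 1 <= E). { unfold E. rewrite <- exp_0. apply exp_le_mono. apply Rmult_le_pos; [lra| apply pow2_ge_0]. }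
    assert (Hmu : mu (S mm) <= E).
    { destruct (Rle_dec (mu (S mm)) 0) as [|Hp]; [lra|].
      specialize (HN1 (S mm) ltac:(unfold N0 in Hm; lia)). rewrite Hl1q in HN1. fold x in HN1.
      assert (Hx2 : 0 < x ^ 2) by nra.
      assert (ln (mu (S mm)) <= (a / 2 + eps) * x ^ 2).
      { apply (Rmult_lt_compat_r (x ^ 2)) in HN1; auto. unfold Rdiv in HN1.
        rewrite Rmult_assoc, Rinv_l in HN1 by lra. lra. }
      unfold E. rewrite <- (exp_ln (mu (S mm))) by lra. apply exp_le_mono; auto. }
    assert (Hrp : r ^ (2 * S mm) = exp (2 * x * b)).
    { rewrite <- Rpower_pow by lra. unfold Rpower. rewrite Hlnr, mult_INR. fold x. simpl INR. f_equal; ring. }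
    assert (HB1 : 2 + (mu (S mm) + 1) / (r - 1) <= (2 + 2 / (r - 1)) * E).
    { assert (0 < / (r - 1)) by (apply Rinv_0_lt_compat; lra). unfold Rdiv.
      assert ((mu (S mm) + 1) * / (r - 1) <= (E + 1) * / (r - 1)) by (apply Rmult_le_compat_r; lra).
      assert ((E + 1) * / (r - 1) <= 2 * / (r - 1) * E) by nra. nra. }
    assert (Hexp : exp (2 * x * b) * E <= exp (gam * INR (S mm) ^ 2)).
    { unfold E. rewrite <- exp_plus. apply exp_le_mono. fold x. unfold gam.
      assert (INR nA <= x) by (unfold x; apply le_INR; unfold N0 in Hm; lia).
      assert (2 * b <= eps * x) by nra. nra. }
    assert (0 <= r ^ (2 * S mm)) by (apply pow_le; lra).
    assert (M <= exp (2 * x * b) * ((2 + 2 / (r - 1)) * E)).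
    { rewrite <- Hrp. eapply Rle_trans; [exact HMb|]. apply Rmult_le_compat_l; auto. }
    unfold K. assert (0 < 2 + 2 / (r - 1)). { assert (0 < 2 / (r - 1)) by (apply Rdiv_lt_0_compat; lra). lra. }
    assert (exp (2 * x * b) * ((2 + 2 / (r - 1)) * E) <= (2 + 2 / (r - 1)) * exp (gam * INR (S mm) ^ 2)).
    { replace (exp (2 * x * b) * ((2 + 2 / (r - 1)) * E)) with ((2 + 2 / (r - 1)) * (exp (2 * x * b) * E)) by ring.
      apply Rmult_le_compat_l; lra. }
    fold x in H4. lra. }
  pose proof (core q d (m0 + m0) K gam N0 Hq1 HK Hann HC0 Hgam Hgr) as Hd0.
  intros j. rewrite powerRZ_Ez by lra. set (t := Ez q (IZR j)).
  assert (Ht : 0 < t) by apply Ez_pos.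
  pose proof (dens_diff q G g Hq1 Hg t Ht) as Dg.
  specialize (Hd0 j). unfold d, pp in Hd0. fold t in Hd0.
  unfold fd. apply (Rmult_eq_reg_l (t * (1 - q))); [|apply Rmult_integral_contrapositive; split; lra].
  field_simplify; [|lra]. lra.
Qed.
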